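(* Let $\tau$ be any tiling of the plane by the Kari–Culik tileset $T$ described in the context, and fix any horizontal line of the grid, i.e. fix $j\in\mathbb{Z}$ and let $u=(u_k)_{k\in\mathbb{Z}}$ be the bi-infinite sequence of numerical values of the colors on the top sides of the tiles $\tau(k,j)$, $k\in\mathbb{Z}$ (with $0'$ counted as the value $0$). Then $u$ has an average: there is a real number $x$ such that the averages $\frac{1}{b-a}\sum_{k=a}^{b-1}u_k$ over finite segments $[a,b)$ converge to $x$ as the length $b-a$ tends to infinity (independently of the position of the segments).
   Context: A Wang tile is a unit square with a color on each side; a tiling of the plane assigns a tile to every cell of $\mathbb{Z}^2$ so that adjacent tiles have equal colors on their common side. The Kari–Culik tileset $T$ uses horizontal-edge (top/bottom) colors $0,0',1,2$ (with numerical values $0,0,1,2$) and vertical-edge colors from two disjoint state sets $\{s_0,s_1\}$ and $\{r_0,r_{1/3},r_{2/3}\}$. Writing a tile as (left, bottom, top, right), the 13 tiles are: $(s_0,0,0',s_0)$, $(s_1,0,0',s_1)$, $(s_0,1,2,s_0)$, $(s_1,1,2,s_1)$, $(s_0,1,1,s_1)$, $(s_1,0,1,s_0)$, $(s_1,0',1,s_0)$, $(r_0,2,1,r_{1/3})$, $(r_{1/3},2,1,r_{2/3})$, $(r_{1/3},1,0,r_0)$, $(r_{2/3},1,0,r_{1/3})$, $(r_0,1,1,r_{2/3})$, $(r_{2/3},2,0,r_0)$. *)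

(* Defs.v *)
From Stdlib Require Import Reals ZArith List.
Open Scope R_scope.

Inductive hcolor : Type := H0 | H0' | H1 | H2.

Definition hval (c : hcolor) : R :=
  match c with H0 => 0 | H0' => 0 | H1 => 1 | H2 => 2 end.

Inductive vcolor : Type := S0 | S1 | R0 | R13 | R23.

Record tile : Type := mkTile {
  t_left : vcolor; t_bottom : hcolor; t_top : hcolor; t_right : vcolor }.

Definition KC_tiles : list tile :=
  mkTile S0 H0 H0' S0 :: mkTile S1 H0 H0' S1 ::
  mkTile S0 H1 H2 S0  :: mkTile S1 H1 H2 S1 ::
  mkTile S0 H1 H1 S1  :: mkTile S1 H0 H1 S0 ::
  mkTile S1 H0' H1 S0 ::
  mkTile R0 H2 H1 R13 :: mkTile R13 H2 H1 R23 ::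
  mkTile R13 H1 H0 R0 :: mkTile R23 H1 H0 R13 ::
  mkTile R0 H1 H1 R23 :: mkTile R23 H2 H0 R0 :: nil.

(* A tiling of Z^2 by the Kari-Culik tileset: tau k j is the tile at
   column k, row j (row j+1 lies above row j). *)
Definition KC_tiling (tau : Z -> Z -> tile) : Prop :=
  (forall k j, In (tau k j) KC_tiles) /\
  (forall k j, t_right (tau k j) = t_left (tau (k + 1)%Z j)) /\
  (forall k j, t_top (tau k j) = t_bottom (tau k (j + 1)%Z)).

(* sum_{k=a}^{b-1} u k, for a <= b (0 otherwise) *)
Definition seg_sum (u : Z -> R) (a b : Z) : R :=
  fold_right Rplus 0
    (map (fun i : nat => u (a + Z.of_nat i)%Z) (seq 0 (Z.to_nat (b - a)))).

Definition seg_avg (u : Z -> R) (a b : Z) : R := seg_sum u a b / IZR (b - a).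

Definition has_average (u : Z -> R) (x : R) : Prop :=
  forall eps : R, eps > 0 ->
    exists N : Z, forall a b : Z, (N <= b - a)%Z -> Rabs (seg_avg u a b - x) < eps.

(* Main.v *)
Require Import Defs.
From Stdlib Require Import Reals ZArith Lra Lia List Classical ClassicalEpsilon.
Open Scope R_scope.

Definition ssum (w : Z -> R) (a : Z) (n : nat) : R :=
  fold_right Rplus 0 (map (fun i : nat => w (a + Z.of_nat i)%Z) (seq 0 n)).

Lemma ssum_S w a n : ssum w a (S n) = w a + ssum w (a+1)%Z n.
Proof.
  unfold ssum. simpl. rewrite Z.add_0_r. f_equal.
  rewrite <- seq_shift, map_map. f_equal. apply map_ext. intros i.
  f_equal. lia.
Qed.

Lemma ssum_add w n : forall m a, ssum w a (n+m) = ssum w a n + ssum w (a + Z.of_nat n)%Z m.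
Proof.
  induction n as [|n IH]; intros m a.
  - simpl. rewrite Z.add_0_r. unfold ssum at 2. simpl. ring.
  - simpl plus. rewrite !ssum_S, IH.
    replace (a + 1 + Z.of_nat n)%Z with (a + Z.of_nat (S n))%Z by lia. ring.
Qed.

Lemma ssum_bound w lo hi : (forall k, lo <= w k <= hi) ->
  forall n a, INR n * lo <= ssum w a n <= INR n * hi.
Proof.
  intros H n; induction n as [|n IH]; intros a.
  - unfold ssum; simpl; lra.
  - rewrite ssum_S, S_INR. specialize (IH (a+1)%Z). specialize (H a). lra.
Qed.

Lemma ssum_opp w n : forall a, ssum (fun k => - w k) a n = - ssum w a n.
Proof.
  induction n as [|n IH]; intros a.
  - unfold ssum; simpl; lra.
  - rewrite !ssum_S, IH. ring.
Qed.

Lemma ssum_tele w v c lam : (forall k, w k = lam * v k + (c k - c (k+1)%Z)) ->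
  forall n a, ssum w a n = lam * ssum v a n + (c a - c (a + Z.of_nat n)%Z).
Proof.
  intros H n; induction n as [|n IH]; intros a.
  - unfold ssum; simpl. rewrite Z.add_0_r. ring.
  - rewrite !ssum_S, IH, H.
    replace (a + 1 + Z.of_nat n)%Z with (a + Z.of_nat (S n))%Z by lia. ring.
Qed.

Definition sup (E : R -> Prop) : R := epsilon (inhabits 0) (is_lub E).

Lemma sup_spec E : bound E -> (exists x, E x) -> is_lub E (sup E).
Proof.
  intros H1 H2. unfold sup. apply epsilon_spec.
  destruct (completeness E H1 H2) as [m Hm]. exists m; exact Hm.
Qed.

Lemma Rabs_le_b x B : Rabs x <= B -> - B <= x <= B.
Proof. unfold Rabs; destruct Rcase_abs; lra. Qed.

Lemma arch_nat y : exists n : nat, y < INR n.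
Proof.
  destruct (archimed y) as [H1 _].
  exists (Z.to_nat (up y)). destruct (Z_le_gt_dec 0 (up y)).
  - rewrite INR_IZR_INZ, Z2Nat.id by lia. lra.
  - assert (IZR (up y) <= 0) by (apply IZR_le; lia).
    replace (Z.to_nat (up y)) with 0%nat by lia. simpl. lra.
Qed.

Definition Mx (w : Z -> R) (n : nat) : R := sup (fun y => exists a, y = ssum w a n).
Definition Ax (w : Z -> R) : R :=
  - sup (fun y => exists n, (0 < n)%nat /\ y = - (Mx w n / INR n)).

Section Avg.
Variable w : Z -> R.
Variable B : R.
Hypothesis HB : forall k, Rabs (w k) <= B.

Lemma wb k : - B <= w k <= B.
Proof. apply Rabs_le_b, HB. Qed.

Lemma B_nonneg : 0 <= B.
Proof. pose proof (HB 0%Z). pose proof (Rabs_pos (w 0%Z)). lra. Qed.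

Lemma Mx_spec n : is_lub (fun y => exists a, y = ssum w a n) (Mx w n).
Proof.
  apply sup_spec.
  - exists (INR n * B). intros y [a ->]. apply (ssum_bound w (-B) B wb).
  - exists (ssum w 0%Z n). exists 0%Z. reflexivity.
Qed.

Lemma Mx_ge n a : ssum w a n <= Mx w n.
Proof. apply (proj1 (Mx_spec n)). exists a; reflexivity. Qed.

Lemma Mx_le n y : (forall a, ssum w a n <= y) -> Mx w n <= y.
Proof. intros H. apply (proj2 (Mx_spec n)). intros z [a ->]. apply H. Qed.

Lemma Mx_bnd n : - (INR n * B) <= Mx w n <= INR n * B.
Proof.
  split.
  - pose proof (Mx_ge n 0%Z). pose proof (ssum_bound w (-B) B wb n 0%Z). lra.
  - apply Mx_le. intros a. apply (ssum_bound w (-B) B wb).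
Qed.

Lemma Mx_sub n m : Mx w (n+m) <= Mx w n + Mx w m.
Proof.
  apply Mx_le. intros a. rewrite ssum_add.
  pose proof (Mx_ge n a). pose proof (Mx_ge m (a + Z.of_nat n)%Z). lra.
Qed.

Lemma Aset_lub : is_lub (fun y => exists n, (0 < n)%nat /\ y = - (Mx w n / INR n)) (- Ax w).
Proof.
  unfold Ax. rewrite Ropp_involutive. apply sup_spec.
  - exists B. intros y [n [Hn ->]].
    assert (0 < INR n) by (apply lt_0_INR; lia).
    pose proof (Mx_bnd n).
    assert (- B <= Mx w n / INR n).
    { unfold Rdiv. replace (-B) with ((- (INR n * B)) * / INR n) by (field; lra).
      apply Rmult_le_compat_r; [left; apply Rinv_0_lt_compat; lra| lra]. }
    lra.
  - exists (- (Mx w 1 / INR 1)). exists 1%nat. split; [lia|reflexivity].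
Qed.

Lemma Ax_le n : (0 < n)%nat -> Ax w * INR n <= Mx w n.
Proof.
  intros Hn. assert (0 < INR n) by (apply lt_0_INR; lia).
  assert (H1 : - (Mx w n / INR n) <= - Ax w).
  { apply (proj1 Aset_lub). exists n. split; [lia|reflexivity]. }
  assert (Mx w n = (Mx w n / INR n) * INR n) by (field; lra).
  rewrite H0. apply Rmult_le_compat_r; lra.
Qed.

Lemma Ax_approx eps : 0 < eps -> exists n0, (0 < n0)%nat /\ Mx w n0 < (Ax w + eps) * INR n0.
Proof.
  intros He. apply NNPP. intros Hno.
  assert (Hub : is_upper_bound (fun y => exists n, (0 < n)%nat /\ y = - (Mx w n / INR n)) (- (Ax w + eps))).
  { intros y [n [Hn ->]]. assert (0 < INR n) by (apply lt_0_INR; lia).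
    assert (~ Mx w n < (Ax w + eps) * INR n) by (intro; apply Hno; exists n; auto).
    assert ((Ax w + eps) <= Mx w n / INR n).
    { unfold Rdiv. replace (Ax w + eps) with (((Ax w + eps) * INR n) * / INR n) by (field; lra).
      apply Rmult_le_compat_r; [left; apply Rinv_0_lt_compat; lra| lra]. }
    lra. }
  pose proof (proj2 Aset_lub _ Hub). lra.
Qed.

Lemma Ax_lin n0 : (0 < n0)%nat -> forall n, Mx w n <= (Mx w n0 / INR n0) * INR n + 2 * B * INR n0.
Proof.
  intros Hn0. assert (0 < INR n0) by (apply lt_0_INR; lia).
  set (mu := Mx w n0 / INR n0).
  assert (Hmu : - B <= mu).
  { pose proof (Mx_bnd n0). unfold mu, Rdiv.
    replace (-B) with ((- (INR n0 * B)) * / INR n0) by (field; lra).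
    apply Rmult_le_compat_r; [left; apply Rinv_0_lt_compat; lra| lra]. }
  assert (Hm0 : Mx w n0 = mu * INR n0) by (unfold mu; field; lra).
  pose proof B_nonneg.
  intros n. induction n as [n IH] using (well_founded_induction lt_wf).
  destruct (lt_dec n n0) as [Hlt|Hge].
  - pose proof (Mx_bnd n). assert (INR n < INR n0) by (apply lt_INR; lia).
    assert (0 <= (mu + B) * INR n) by (apply Rmult_le_pos; [lra| apply pos_INR]).
    nra.
  - replace n with (n0 + (n - n0))%nat by lia.
    pose proof (Mx_sub n0 (n - n0)).
    assert (n - n0 < n)%nat by lia.
    specialize (IH (n - n0)%nat H2).
    rewrite plus_INR. rewrite Hm0 in H1. lra.
Qed.

Lemma Ax_tail eps : 0 < eps -> exists N, (0 < N)%nat /\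
  forall n, (N <= n)%nat -> Mx w n < (Ax w + eps) * INR n.
Proof.
  intros He. destruct (Ax_approx (eps/2)) as [n0 [Hn0 Happ]]; [lra|].
  assert (0 < INR n0) by (apply lt_0_INR; lia).
  destruct (arch_nat (4 * B * INR n0 / eps)) as [N0 HN0].
  exists (S N0). split; [lia|]. intros n Hn.
  assert (HnN : INR (S N0) <= INR n) by (apply le_INR; lia).
  rewrite S_INR in HnN.
  assert (4 * B * INR n0 < eps * INR n).
  { assert (4 * B * INR n0 = (4 * B * INR n0 / eps) * eps) by (field; lra). nra. }
  pose proof (Ax_lin n0 Hn0 n).
  assert (Mx w n0 / INR n0 < Ax w + eps / 2).
  { unfold Rdiv at 1. replace (Ax w + eps/2) with (((Ax w + eps/2) * INR n0) * / INR n0) by (field; lra).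
    apply Rmult_lt_compat_r; [apply Rinv_0_lt_compat; lra| lra]. }
  assert (0 < INR n) by (pose proof (pos_INR N0); lra).
  assert (Mx w n0 / INR n0 * INR n < (Ax w + eps / 2) * INR n) by (apply Rmult_lt_compat_r; lra).
  lra.
Qed.

Lemma Ax_bnd lo hi : (forall k, lo <= w k <= hi) -> lo <= Ax w <= hi.
Proof.
  intros H. split.
  - apply Rnot_lt_le. intros Hlt.
    destruct (Ax_tail (lo - Ax w)) as [N [HN HT]]; [lra|].
    specialize (HT N (le_n _)). pose proof (Mx_ge N 0%Z).
    pose proof (ssum_bound w lo hi H N 0%Z).
    assert (0 < INR N) by (apply lt_0_INR; lia). nra.
  - pose proof (Ax_le 1 (le_n _)).
    assert (Mx w 1 <= INR 1 * hi) by (apply Mx_le; intro a; apply (ssum_bound w lo hi H)).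
    simpl in *. lra.
Qed.

End Avg.
Lemma Ax_transfer w v Bw Bv lam C :
  (forall k, Rabs (w k) <= Bw) -> (forall k, Rabs (v k) <= Bv) -> 0 < lam ->
  (forall a n, Rabs (ssum w a n - lam * ssum v a n) <= C) -> Ax w = lam * Ax v.
Proof.
  intros Hw Hv Hl HC.
  assert (H1 : forall n, Mx w n <= lam * Mx v n + C).
  { intros n. apply (Mx_le w Bw Hw). intros a.
    pose proof (Mx_ge v Bv Hv n a). pose proof (Rabs_le_b _ _ (HC a n)).
    assert (lam * ssum v a n <= lam * Mx v n) by (apply Rmult_le_compat_l; lra). lra. }
  assert (H2 : forall n, lam * Mx v n <= Mx w n + C).
  { intros n. assert (Mx v n <= (Mx w n + C) / lam).
    { apply (Mx_le v Bv Hv). intros a.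
      pose proof (Mx_ge w Bw Hw n a). pose proof (Rabs_le_b _ _ (HC a n)).
      unfold Rdiv. replace (ssum v a n) with ((lam * ssum v a n) * / lam) by (field; lra).
      apply Rmult_le_compat_r; [left; apply Rinv_0_lt_compat; lra| lra]. }
    assert (lam * Mx v n <= lam * ((Mx w n + C) / lam)) by (apply Rmult_le_compat_l; lra).
    replace (lam * ((Mx w n + C) / lam)) with (Mx w n + C) in H0 by (field; lra). lra. }
  assert (HC0 : 0 <= C) by (pose proof (HC 0%Z 0%nat); pose proof (Rabs_pos (ssum w 0 0 - lam * ssum v 0 0)); lra).
  destruct (Rtotal_order (Ax w) (lam * Ax v)) as [Hlt|[Heq|Hgt]]; auto; exfalso.
  - set (d := lam * Ax v - Ax w).
    destruct (Ax_tail w Bw Hw (d/2)) as [N [HN HT]]; [unfold d; lra|].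
    destruct (arch_nat (2 * C / d)) as [M HM].
    set (n := (N + M)%nat).
    assert (HnM : INR M <= INR n) by (apply le_INR; unfold n; lia).
    assert (Hn0 : (0 < n)%nat) by (unfold n; lia).
    specialize (HT n ltac:(unfold n; lia)).
    pose proof (Ax_le v Bv Hv n Hn0). specialize (H2 n).
    assert (0 < INR n) by (apply lt_0_INR; lia).
    assert (lam * (Ax v * INR n) <= lam * Mx v n) by (apply Rmult_le_compat_l; lra).
    assert (2 * C = (2 * C / d) * d) by (unfold d; field; lra).
    assert (2 * C < INR n * d) by (unfold d in *; nra).
    unfold d in *. nra.
  - set (d := Ax w - lam * Ax v).
    destruct (Ax_tail v Bv Hv (d/(2*lam))) as [N [HN HT]].
    { unfold d; apply Rdiv_lt_0_compat; lra. }
    destruct (arch_nat (2 * C / d)) as [M HM].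
    set (n := (N + M)%nat).
    assert (HnM : INR M <= INR n) by (apply le_INR; unfold n; lia).
    assert (Hn0 : (0 < n)%nat) by (unfold n; lia).
    specialize (HT n ltac:(unfold n; lia)).
    pose proof (Ax_le w Bw Hw n Hn0). specialize (H1 n).
    assert (0 < INR n) by (apply lt_0_INR; lia).
    assert (HH : lam * Mx v n < lam * ((Ax v + d / (2 * lam)) * INR n)) by (apply Rmult_lt_compat_l; lra).
    replace (lam * ((Ax v + d / (2 * lam)) * INR n)) with (lam * Ax v * INR n + d/2 * INR n) in HH by (field; lra).
    assert (2 * C = (2 * C / d) * d) by (unfold d; field; lra).
    assert (2 * C < INR n * d) by (unfold d in *; nra).
    unfold d in *. nra.
Qed.

Lemma div_lt_helper s c n : 0 < n -> s < c * n -> s / n < c.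
Proof.
  intros Hn H. unfold Rdiv. replace c with ((c*n) * / n) by (field; lra).
  apply Rmult_lt_compat_r; [apply Rinv_0_lt_compat; lra| lra].
Qed.

Lemma div_gt_helper s c n : 0 < n -> c * n < s -> c < s / n.
Proof.
  intros Hn H. unfold Rdiv. replace c with ((c*n) * / n) by (field; lra).
  apply Rmult_lt_compat_r; [apply Rinv_0_lt_compat; lra| lra].
Qed.

Lemma avg_from w B : (forall k, Rabs (w k) <= B) ->
  Ax w = - Ax (fun k => - w k) -> has_average w (Ax w).
Proof.
  intros HB Heq eps He.
  assert (HB' : forall k, Rabs ((fun k => - w k) k) <= B) by (intro k; rewrite Rabs_Ropp; apply HB).
  destruct (Ax_tail w B HB eps He) as [N1 [HN1 T1]].
  destruct (Ax_tail _ B HB' eps He) as [N2 [HN2 T2]].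
  exists (Z.of_nat (N1 + N2)). intros a b Hab.
  set (n := Z.to_nat (b - a)).
  assert (Hn1 : (N1 <= n)%nat) by (unfold n; lia).
  assert (Hn2 : (N2 <= n)%nat) by (unfold n; lia).
  assert (HI : IZR (b - a) = INR n) by (unfold n; rewrite INR_IZR_INZ, Z2Nat.id by lia; reflexivity).
  assert (0 < INR n) by (apply lt_0_INR; lia).
  unfold seg_avg. change (seg_sum w a b) with (ssum w a n). rewrite HI.
  specialize (T1 n Hn1). specialize (T2 n Hn2).
  pose proof (Mx_ge w B HB n a). pose proof (Mx_ge _ B HB' n a).
  rewrite ssum_opp in H1.
  apply Rabs_def1.
  - assert (ssum w a n / INR n < Ax w + eps) by (apply div_lt_helper; lra). lra.
  - assert (Ax w - eps < ssum w a n / INR n) by (apply div_gt_helper; [lra|];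
      assert (Ax (fun k => - w k) = - Ax w) by lra; rewrite H2 in T2; nra). lra.
Qed.
Definition fl (x : R) : Z := (up x - 1)%Z.

Lemma fl_spec x : IZR (fl x) <= x < IZR (fl x) + 1.
Proof.
  unfold fl. rewrite minus_IZR. destruct (archimed x). lra.
Qed.

Definition theta : R := ln 2 / ln 6.

Lemma ln2_pos : 0 < ln 2.
Proof. rewrite <- ln_1. apply ln_increasing; lra. Qed.
Lemma ln6_eq : ln 6 = ln 2 + ln 3.
Proof. rewrite <- ln_mult by lra. f_equal; lra. Qed.
Lemma ln3_pos : 0 < ln 3.
Proof. rewrite <- ln_1. apply ln_increasing; lra. Qed.

Lemma theta_bounds : 0 < theta < 1.
Proof.
  pose proof ln2_pos. pose proof ln3_pos. pose proof ln6_eq. unfold theta.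
  split.
  - apply Rdiv_lt_0_compat; lra.
  - apply (Rmult_lt_reg_r (ln 6)); [lra|]. unfold Rdiv. rewrite Rmult_assoc, Rinv_l by lra. lra.
Qed.

Lemma nat_pow_mod3 s : exists q, (2 ^ s = 3 * q + 1 \/ 2 ^ s = 3 * q + 2)%nat.
Proof.
  induction s as [|s [q IH]]; [exists 0%nat; left; reflexivity|].
  rewrite Nat.pow_succ_r'. destruct IH as [IH|IH]; rewrite IH.
  - exists (2*q)%nat. lia.
  - exists (2*q+1)%nat. lia.
Qed.

Lemma nat_pow6_mod3 m : (0 < m)%nat -> exists q, (6 ^ m = 3 * q)%nat.
Proof.
  intros Hm. destruct m as [|m]; [lia|]. rewrite Nat.pow_succ_r'.
  exists (2 * 6 ^ m)%nat. lia.
Qed.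

Lemma theta_irr s m : (0 < s)%nat -> INR s * theta <> IZR m.
Proof.
  intros Hs Heq. pose proof ln2_pos as L2. pose proof ln3_pos as L3. pose proof ln6_eq as L6.
  assert (Hs' : 0 < INR s) by (apply lt_0_INR; lia).
  assert (H1 : INR s * ln 2 = IZR m * ln 6).
  { unfold theta in Heq. rewrite <- Heq. field. lra. }
  destruct (Z_le_gt_dec m 0) as [Hm|Hm].
  - assert (IZR m <= 0) by (apply IZR_le; lia). nra.
  - assert (H3 : IZR m = INR (Z.to_nat m)) by (rewrite INR_IZR_INZ, Z2Nat.id by lia; reflexivity).
    rewrite H3 in H1. rewrite <- !ln_pow in H1 by lra.
    apply ln_inv in H1; try (apply pow_lt; lra).
    assert (H4 : INR (2 ^ s) = INR (6 ^ Z.to_nat m)).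
    { rewrite !pow_INR. replace (INR 2) with 2 by (simpl; ring).
      replace (INR 6) with 6 by (simpl; ring). exact H1. }
    apply INR_eq in H4.
    destruct (nat_pow_mod3 s) as [q1 Hq1]. destruct (nat_pow6_mod3 (Z.to_nat m) ltac:(lia)) as [q2 Hq2].
    rewrite H4, Hq2 in Hq1. lia.
Qed.

Lemma pigeon N : forall f : nat -> nat, (forall k, (k <= N)%nat -> (f k < N)%nat) ->
  exists i j, (i < j <= N)%nat /\ f i = f j.
Proof.
  induction N as [|N IH]; intros f Hf.
  - specialize (Hf 0%nat (le_n _)). lia.
  - destruct (classic (exists i, (i <= N)%nat /\ f i = f (S N))) as [[i [Hi Heq]]|Hno].
    + exists i, (S N). split; [lia|exact Heq].
    + set (g := fun k => if Nat.ltb (f k) (f (S N)) then f k else (f k - 1)%nat).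
      assert (HfN : (f (S N) <= N)%nat) by (specialize (Hf (S N) (le_n _)); lia).
      assert (Hne : forall k, (k <= N)%nat -> f k <> f (S N)) by (intros k Hk He; apply Hno; eauto).
      destruct (IH g) as [i [j [Hij Hg]]].
      { intros k Hk. unfold g. specialize (Hne k Hk). specialize (Hf k ltac:(lia)).
        destruct (Nat.ltb_spec (f k) (f (S N))); lia. }
      exists i, j. split; [lia|].
      unfold g in Hg. pose proof (Hne i ltac:(lia)). pose proof (Hne j ltac:(lia)).
      destruct (Nat.ltb_spec (f i) (f (S N))); destruct (Nat.ltb_spec (f j) (f (S N))); lia.
Qed.

Definition frac (x : R) : R := x - IZR (fl x).

Lemma frac_spec x : 0 <= frac x < 1.
Proof. unfold frac. pose proof (fl_spec x). lra. Qed.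

Lemma dirichlet N : (0 < N)%nat -> exists s m d, (0 < s)%nat /\
  INR s * theta = IZR m + d /\ d <> 0 /\ Rabs d < / INR N.
Proof.
  intros HN. assert (HN' : 0 < INR N) by (apply lt_0_INR; lia).
  set (f := fun k : nat => Z.to_nat (fl (INR N * frac (INR k * theta)))).
  assert (Hb : forall k, (0 <= fl (INR N * frac (INR k * theta)))%Z /\
                         (fl (INR N * frac (INR k * theta)) < Z.of_nat N)%Z).
  { intros k. pose proof (frac_spec (INR k * theta)). pose proof (fl_spec (INR N * frac (INR k * theta))).
    assert (0 <= INR N * frac (INR k * theta)) by nra.
    assert (INR N * frac (INR k * theta) < INR N) by nra.
    split.
    - apply le_IZR. assert (-1 < IZR (fl (INR N * frac (INR k * theta)))) by lra.
      assert (-1 < IZR (fl (INR N * frac (INR k * theta))) ) by lra.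
      apply Rnot_lt_le. intro Hc. assert (IZR (fl (INR N * frac (INR k * theta))) <= -1).
      { change (-1) with (IZR (-1)). apply IZR_le. apply lt_IZR in Hc. lia. } lra.
    - apply lt_IZR. rewrite <- INR_IZR_INZ. lra. }
  destruct (pigeon N f) as [i [j [Hij Hf]]].
  { intros k Hk. unfold f. destruct (Hb k). lia. }
  unfold f in Hf. destruct (Hb i) as [Hi1 Hi2]. destruct (Hb j) as [Hj1 Hj2].
  apply Z2Nat.inj in Hf; try lia.
  exists (j - i)%nat, (fl (INR j * theta) - fl (INR i * theta))%Z,
    (frac (INR j * theta) - frac (INR i * theta)).
  assert (Heqs : INR (j - i) * theta = IZR (fl (INR j * theta) - fl (INR i * theta)) +
                 (frac (INR j * theta) - frac (INR i * theta))).
  { rewrite minus_INR by lia. rewrite minus_IZR. unfold frac. ring. }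
  split; [lia|]. split; [exact Heqs|]. split.
  - intro Hd. rewrite Hd, Rplus_0_r in Heqs. eapply theta_irr; [|exact Heqs]. lia.
  - pose proof (fl_spec (INR N * frac (INR i * theta))).
    pose proof (fl_spec (INR N * frac (INR j * theta))).
    rewrite Hf in H.
    assert (Rabs (INR N * (frac (INR j * theta) - frac (INR i * theta))) < 1).
    { apply Rabs_def1; lra. }
    rewrite Rabs_mult, Rabs_pos_eq in H1 by lra.
    apply (Rmult_lt_reg_l (INR N)); [lra|]. rewrite Rinv_r by lra. lra.
Qed.

Lemma nat_above y : 0 <= y -> exists t : nat, y < INR t <= y + 1.
Proof.
  intros Hy. pose proof (fl_spec y).
  assert (0 <= fl y)%Z.
  { apply le_IZR. apply Rnot_lt_le. intro Hc. assert (IZR (fl y) <= -1).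
    { change (-1) with (IZR (-1)). apply IZR_le. apply lt_IZR in Hc. lia. } lra. }
  exists (Z.to_nat (fl y + 1)). rewrite INR_IZR_INZ, Z2Nat.id by lia. rewrite plus_IZR. lra.
Qed.

Lemma density c q : 0 < q -> q <= 1 -> exists (k : nat) (n : Z),
  IZR n < c + INR k * theta < IZR n + q.
Proof.
  intros Hq Hq1.
  destruct (arch_nat (/ q)) as [N HN].
  assert (HN0 : (0 < N)%nat).
  { destruct N; [simpl in HN; pose proof (Rinv_0_lt_compat q Hq); lra| lia]. }
  assert (HN' : 0 < INR N) by (apply lt_0_INR; lia).
  assert (HNq : / INR N < q).
  { apply (Rmult_lt_reg_l (INR N)); [lra|]. rewrite Rinv_r by lra.
    apply (Rmult_lt_reg_l (/ q)); [apply Rinv_0_lt_compat; lra|].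
    replace (/ q * (INR N * q)) with (INR N) by (field; lra). lra. }
  destruct (dirichlet N HN0) as [s [m [d [Hs [Hsm [Hd Had]]]]]].
  pose proof (fl_spec c).
  destruct (Rlt_or_le 0 d) as [Hdp|Hdn].
  - rewrite Rabs_pos_eq in Had by lra.
    set (n0 := (fl c + 1)%Z).
    assert (Hn0 : c < IZR n0) by (unfold n0; rewrite plus_IZR; lra).
    destruct (nat_above ((IZR n0 - c) / d)) as [t [Ht1 Ht2]].
    { apply Rlt_le, Rdiv_lt_0_compat; lra. }
    exists (t * s)%nat, (n0 + Z.of_nat t * m)%Z.
    rewrite mult_INR, plus_IZR, mult_IZR, <- INR_IZR_INZ.
    replace (c + INR t * INR s * theta) with (c + INR t * IZR m + INR t * d)
      by (rewrite Rmult_assoc, Hsm; ring).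
    assert (IZR n0 - c < INR t * d).
    { replace (IZR n0 - c) with ((IZR n0 - c) / d * d) by (field; lra). nra. }
    assert (INR t * d <= IZR n0 - c + d).
    { replace (IZR n0 - c) with ((IZR n0 - c) / d * d) by (field; lra). nra. }
    lra.
  - assert (Hdn' : d < 0) by lra.
    rewrite Rabs_left in Had by lra.
    set (n0 := (fl c - 1)%Z).
    assert (Hn0 : IZR n0 + q <= c) by (unfold n0; rewrite minus_IZR; lra).
    destruct (nat_above ((c - IZR n0 - q) / (- d))) as [t [Ht1 Ht2]].
    { unfold Rdiv. apply Rmult_le_pos; [lra| left; apply Rinv_0_lt_compat; lra]. }
    exists (t * s)%nat, (n0 + Z.of_nat t * m)%Z.
    rewrite mult_INR, plus_IZR, mult_IZR, <- INR_IZR_INZ.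
    replace (c + INR t * INR s * theta) with (c + INR t * IZR m + INR t * d)
      by (rewrite Rmult_assoc, Hsm; ring).
    assert (c - IZR n0 - q < INR t * (- d)).
    { replace (c - IZR n0 - q) with ((c - IZR n0 - q) / (-d) * (-d)) by (field; lra). nra. }
    assert (INR t * (- d) <= c - IZR n0 - q - d).
    { replace (c - IZR n0 - q) with ((c - IZR n0 - q) / (-d) * (-d)) by (field; lra). nra. }
    lra.
Qed.
Definition step_ok (al be : nat -> R) (k : nat) : Prop :=
  (0 <= al k <= 1 /\ 0 <= be k <= 1 /\ al (S k) = 2 * al k /\ be (S k) = 2 * be k) \/
  (1 <= al k <= 2 /\ 1 <= be k <= 2 /\ al (S k) = al k / 3 /\ be (S k) = be k / 3).

Lemma pow2_ge k : INR k + 1 <= 2 ^ k.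
Proof.
  induction k as [|k IH]; [simpl; lra|]. rewrite S_INR. change (2 ^ S k) with (2 * 2 ^ k).
  pose proof (pos_INR k). lra.
Qed.

Lemma core (al be : nat -> R) : (forall k, step_ok al be k) -> be 0%nat < al 0%nat -> False.
Proof.
  intros H Hlt.
  assert (Hbe0 : 0 <= be 0%nat) by (destruct (H 0%nat) as [[? [? ?]]|[? [? ?]]]; lra).
  destruct (Req_dec (be 0%nat) 0) as [Hz|Hnz].
  - assert (Hb : forall k, be k = 0).
    { induction k as [|k IH]; [exact Hz|].
      destruct (H k) as [[? [? [? ?]]]|[? [? [? ?]]]]; [rewrite H3, IH; ring| lra]. }
    assert (Ha : forall k, al k = 2 ^ k * al 0%nat).
    { induction k as [|k IH]; [simpl; ring|].
      destruct (H k) as [[? [? [? ?]]]|[? [? [? ?]]]]; [rewrite H2, IH; simpl; ring| rewrite Hb in H1; lra]. }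
    destruct (arch_nat (2 / al 0%nat)) as [k Hk].
    pose proof (pow2_ge k). specialize (Ha k).
    assert (al k <= 2) by (destruct (H k) as [[? [? ?]]|[? [? ?]]]; lra).
    assert (2 = 2 / al 0%nat * al 0%nat) by (field; lra).
    nra.
  - assert (Hb0 : 0 < be 0%nat) by lra.
    set (rho := al 0%nat / be 0%nat).
    assert (Hrho : 1 < rho).
    { unfold rho. apply (Rmult_lt_reg_r (be 0%nat)); [lra|]. unfold Rdiv.
      rewrite Rmult_assoc, Rinv_l by lra. lra. }
    assert (Hab : forall k, al k = rho * be k).
    { induction k as [|k IH]; [unfold rho; field; lra|].
      destruct (H k) as [[? [? [? ?]]]|[? [? [? ?]]]]; [rewrite H2, H3, IH; ring| rewrite H2, H3, IH; field]. }
    assert (Hbp : forall k, 0 < be k).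
    { induction k as [|k IH]; [exact Hb0|].
      destruct (H k) as [[? [? [? ?]]]|[? [? [? ?]]]]; lra. }
    assert (Hxp : forall k, 0 < al k) by (intro k; rewrite Hab; specialize (Hbp k); nra).
    assert (Hx2 : forall k, al k <= 2) by (intro k; destruct (H k) as [[? [? ?]]|[? [? ?]]]; lra).
    assert (Hns : forall k, ~ (1 < al k < rho)).
    { intros k [H1 H2]. destruct (H k) as [[? [? ?]]|[? [? ?]]]; [lra|].
      rewrite Hab in H2. specialize (Hbp k). nra. }
    assert (Hstep : forall k, (al (S k) = 2 * al k /\ al k <= 1) \/ (al (S k) = al k / 3 /\ rho <= al k)).
    { intros k. destruct (H k) as [[? [? [? ?]]]|[? [? [? ?]]]]; [left; lra| right].
      split; [lra|]. rewrite Hab. nra. }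
    assert (Hstay : forall k, 1/3 < al k -> 1/3 < al (S k)).
    { intros k Hk. destruct (Hstep k) as [[? ?]|[? ?]]; lra. }
    assert (Hreach : exists K0, 1/3 < al K0).
    { apply NNPP. intro Hno.
      assert (Hall : forall k, al k <= 1/3) by (intro k; apply Rnot_lt_le; intro; apply Hno; eauto).
      assert (Ha : forall k, al k = 2 ^ k * al 0%nat).
      { induction k as [|k IH]; [simpl; ring|].
        destruct (Hstep k) as [[? ?]|[? ?]]; [rewrite H0, IH; simpl; ring| specialize (Hall k); lra]. }
      specialize (Hxp 0%nat).
      destruct (arch_nat (2 / al 0%nat)) as [k Hk].
      pose proof (pow2_ge k). specialize (Ha k). specialize (Hall k).
      assert (2 = 2 / al 0%nat * al 0%nat) by (field; lra).
      nra. }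
    destruct Hreach as [K0 HK0].
    assert (HK : forall d, 1/3 < al (K0 + d)%nat).
    { induction d as [|d IH]; [rewrite Nat.add_0_r; exact HK0|].
      rewrite Nat.add_succ_r. apply Hstay, IH. }
    pose proof ln2_pos. pose proof ln3_pos. pose proof ln6_eq. pose proof theta_bounds.
    assert (Hlog : forall k, exists e : nat, ln (al k) = ln (al 0%nat) + INR k * ln 2 - INR e * ln 6).
    { induction k as [|k [e IH]]; [exists 0%nat; simpl; ring|].
      specialize (Hxp k). destruct (Hstep k) as [[Hs _]|[Hs _]].
      - exists e. rewrite Hs, ln_mult, IH, S_INR by lra. ring.
      - exists (S e). rewrite Hs. unfold Rdiv. rewrite ln_mult, ln_Rinv, IH, !S_INR by lra. rewrite H2. ring. }
    set (rho' := Rmin rho 2).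
    assert (Hr1 : 1 < rho') by (unfold rho', Rmin; destruct Rle_dec; lra).
    assert (Hr2 : rho' <= 2) by (unfold rho', Rmin; destruct Rle_dec; lra).
    assert (Hr3 : rho' <= rho) by (unfold rho', Rmin; destruct Rle_dec; lra).
    set (q := ln rho' / ln 6).
    assert (Hlr : 0 < ln rho' <= ln 2).
    { split; [rewrite <- ln_1; apply ln_increasing; lra|].
      destruct (Req_dec rho' 2) as [->|]; [lra|]. left; apply ln_increasing; lra. }
    assert (Hq : 0 < q <= theta).
    { unfold q, theta. split; [apply Rdiv_lt_0_compat; lra|].
      unfold Rdiv. apply Rmult_le_compat_r; [left; apply Rinv_0_lt_compat; lra| lra]. }
    destruct (density (ln (al 0%nat) / ln 6 + INR K0 * theta) q) as [k [n Hn]]; [lra|lra|].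
    set (K := (K0 + k)%nat).
    destruct (Hlog K) as [e He].
    set (y := ln (al K) / ln 6).
    assert (Hy : y = ln (al 0%nat) / ln 6 + INR K0 * theta + INR k * theta - INR e).
    { unfold y, theta. rewrite He. unfold K. rewrite plus_INR. field. lra. }
    specialize (HK k). fold K in HK.
    assert (Hy1 : theta - 1 < y).
    { assert (ln (1/3) < ln (al K)) by (apply ln_increasing; lra).
      unfold Rdiv in H4 at 1. rewrite Rmult_1_l, ln_Rinv in H4 by lra.
      unfold y, theta. apply (Rmult_lt_reg_r (ln 6)); [lra|].
      unfold Rdiv. rewrite Rmult_minus_distr_r, !Rmult_assoc, Rinv_l by lra. lra. }
    assert (Hy2 : y <= theta).
    { assert (ln (al K) <= ln 2).
      { destruct (Req_dec (al K) 2) as [->|]; [lra|]. left; apply ln_increasing; [apply Hxp|].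
        specialize (Hx2 K). lra. }
      unfold y, theta. unfold Rdiv. apply Rmult_le_compat_r; [left; apply Rinv_0_lt_compat; lra| lra]. }
    set (d := (n - Z.of_nat e)%Z).
    assert (Hd : IZR d < y < IZR d + q).
    { unfold d. rewrite minus_IZR, <- INR_IZR_INZ. lra. }
    destruct (Z_lt_le_dec 0 d) as [Hd1|Hd1].
    + assert (1 <= IZR d) by (apply IZR_le; lia). lra.
    + destruct (Z_lt_le_dec d 0) as [Hd2|Hd2].
      * assert (IZR d <= -1) by (change (-1) with (IZR (-1)); apply IZR_le; lia). lra.
      * assert (d = 0%Z) by lia. rewrite H4 in Hd. simpl in Hd.
        apply (Hns K). split.
        -- apply ln_lt_inv; [lra| apply Hxp|]. rewrite ln_1.
           unfold y in Hd. destruct Hd as [Hd _].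
           apply (Rmult_lt_reg_r (/ ln 6)); [apply Rinv_0_lt_compat; lra|]. lra.
        -- apply Rlt_le_trans with rho'; [|lra].
           apply ln_lt_inv; [apply Hxp| lra|]. unfold y, q in Hd. destruct Hd as [_ Hd].
           apply (Rmult_lt_reg_r (/ ln 6)); [apply Rinv_0_lt_compat; lra|]. lra.
Qed.

Lemma core_eq (al be : nat -> R) : (forall k, step_ok al be k) -> al 0%nat = be 0%nat.
Proof.
  intros H. destruct (Rtotal_order (al 0%nat) (be 0%nat)) as [Hl|[He|Hg]]; auto; exfalso.
  - apply (core be al); [|exact Hl]. intros k. destruct (H k) as [[? [? [? ?]]]|[? [? [? ?]]]].
    + left; tauto. + right; tauto.
  - exact (core al be H Hg).
Qed.
Definition sv (c : vcolor) : bool := match c with S0 | S1 => true | _ => false end.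
Definition cv (c : vcolor) : R :=
  match c with S0 => 0 | S1 => 1 | Defs.R0 => 0 | R13 => 1/3 | R23 => 2/3 end.

Lemma cv_bnd c : 0 <= cv c <= 1.
Proof. destruct c; simpl; lra. Qed.

Lemma hval_bnd c : 0 <= hval c <= 2.
Proof. destruct c; simpl; lra. Qed.

Lemma tile_prop t : In t KC_tiles ->
  sv (t_left t) = sv (t_right t) /\
  (sv (t_left t) = true -> 0 <= hval (t_bottom t) <= 1 /\
     hval (t_top t) = 2 * hval (t_bottom t) + (cv (t_left t) - cv (t_right t))) /\
  (sv (t_left t) = false -> 1 <= hval (t_bottom t) <= 2 /\
     hval (t_top t) = / 3 * hval (t_bottom t) + (- cv (t_left t) - - cv (t_right t))).
Proof.
  intros H. simpl in H.
  repeat (destruct H as [<-|H]; [simpl; split; [reflexivity|]; split; intro Hc;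
     try discriminate; split; lra|]).
  destruct H.
Qed.

Lemma Z_const (f : Z -> bool) : (forall k, f (k + 1)%Z = f k) -> forall k, f k = f 0%Z.
Proof.
  intros H k. induction k using Z.peano_ind.
  - reflexivity.
  - rewrite <- IHk. apply H.
  - rewrite <- IHk. rewrite <- (Z.succ_pred k) at 2. symmetry. apply H.
Qed.

Lemma row_step (tau : Z -> Z -> tile) : KC_tiling tau -> forall r : Z,
  let u := fun r k => hval (t_top (tau k r)) in
  ((forall k, 0 <= u (r-1)%Z k <= 1) /\
     (forall a n, Rabs (ssum (u r) a n - 2 * ssum (u (r-1)%Z) a n) <= 1)) \/
  ((forall k, 1 <= u (r-1)%Z k <= 2) /\
     (forall a n, Rabs (ssum (u r) a n - / 3 * ssum (u (r-1)%Z) a n) <= 1)).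
Proof.
  intros [Hin [Hh Hv]] r u.
  assert (Hbot : forall k, t_bottom (tau k r) = t_top (tau k (r-1)%Z)).
  { intros k. rewrite Hv. f_equal. f_equal. ring. }
  assert (Hu : forall k, sv (t_left (tau k r)) = sv (t_left (tau 0%Z r))).
  { apply (Z_const (fun k => sv (t_left (tau k r)))). intros k.
    rewrite <- Hh. symmetry. apply (proj1 (tile_prop _ (Hin k r))). }
  assert (Hc : forall a b, Rabs (cv (t_left (tau a r)) - cv (t_left (tau b r))) <= 1).
  { intros a b. pose proof (cv_bnd (t_left (tau a r))). pose proof (cv_bnd (t_left (tau b r))).
    apply Rabs_le. lra. }
  destruct (sv (t_left (tau 0%Z r))) eqn:Eb.
  - left. split.
    + intros k. unfold u. rewrite <- Hbot.
      apply (proj1 (proj2 (tile_prop _ (Hin k r))) (Hu k)).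
    + intros a n.
      rewrite (ssum_tele (u r) (u (r-1)%Z) (fun k => cv (t_left (tau k r))) 2).
      * replace (2 * ssum (u (r - 1)%Z) a n + (cv (t_left (tau a r)) - cv (t_left (tau (a + Z.of_nat n)%Z r))) -
                 2 * ssum (u (r - 1)%Z) a n) with (cv (t_left (tau a r)) - cv (t_left (tau (a + Z.of_nat n)%Z r))) by ring.
        apply Hc.
      * intros k. unfold u. rewrite <- Hbot, <- Hh.
        apply (proj2 (proj1 (proj2 (tile_prop _ (Hin k r))) (Hu k))).
  - right. split.
    + intros k. unfold u. rewrite <- Hbot.
      apply (proj1 (proj2 (proj2 (tile_prop _ (Hin k r))) (Hu k))).
    + intros a n.
      rewrite (ssum_tele (u r) (u (r-1)%Z) (fun k => - cv (t_left (tau k r))) (/3)).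
      * replace (/ 3 * ssum (u (r - 1)%Z) a n + (- cv (t_left (tau a r)) - - cv (t_left (tau (a + Z.of_nat n)%Z r))) -
                 / 3 * ssum (u (r - 1)%Z) a n) with (- (cv (t_left (tau a r)) - cv (t_left (tau (a + Z.of_nat n)%Z r)))) by ring.
        rewrite Rabs_Ropp. apply Hc.
      * intros k. unfold u. rewrite <- Hbot, <- Hh.
        apply (proj2 (proj2 (proj2 (tile_prop _ (Hin k r))) (Hu k))).
Qed.

Theorem mainTheorem4 :
  forall (tau : Z -> Z -> tile), KC_tiling tau ->
  forall j : Z, exists x : R,
    has_average (fun k : Z => hval (t_top (tau k j))) x.
Proof.
  intros tau Htil j.
  set (u := fun r k => hval (t_top (tau k r))).
  assert (Hb : forall r k, Rabs (u r k) <= 2).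
  { intros r k. unfold u. pose proof (hval_bnd (t_top (tau k r))). apply Rabs_le. lra. }
  assert (Hbn : forall r k, Rabs ((fun x => - u r x) k) <= 2).
  { intros r k. rewrite Rabs_Ropp. apply Hb. }
  assert (Hneg : forall w v lam a n, Rabs (ssum w a n - lam * ssum v a n) <= 1 ->
            Rabs (ssum (fun x => - w x) a n - lam * ssum (fun x => - v x) a n) <= 1).
  { intros w v lam a n H. rewrite !ssum_opp.
    replace (- ssum w a n - lam * - ssum v a n) with (- (ssum w a n - lam * ssum v a n)) by ring.
    rewrite Rabs_Ropp. exact H. }
  set (al := fun k : nat => Ax (u (j + Z.of_nat k)%Z)).
  set (be := fun k : nat => - Ax (fun x => - u (j + Z.of_nat k)%Z x)).
  assert (Hstep : forall k, step_ok al be k).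
  { intros k. destruct (row_step tau Htil (j + Z.of_nat k + 1)%Z) as [[H1 H2]|[H1 H2]];
    fold u in H1, H2;
    replace (j + Z.of_nat k + 1 - 1)%Z with (j + Z.of_nat k)%Z in H1, H2 by ring;
    unfold step_ok, al, be; rewrite Nat2Z.inj_succ;
    replace (j + Z.succ (Z.of_nat k))%Z with (j + Z.of_nat k + 1)%Z by ring.
    - left.
      pose proof (Ax_bnd _ 2 (Hb (j + Z.of_nat k)%Z) 0 1 H1).
      assert (forall x, -1 <= (fun x => - u (j + Z.of_nat k)%Z x) x <= 0) by (intro x; specialize (H1 x); unfold u in *; cbv beta in *; lra).
      pose proof (Ax_bnd _ 2 (Hbn (j + Z.of_nat k)%Z) (-1) 0 H0).
      rewrite (Ax_transfer _ _ 2 2 2 1 (Hb _) (Hb _) ltac:(lra) H2).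
      rewrite (Ax_transfer _ _ 2 2 2 1 (Hbn _) (Hbn _) ltac:(lra) (fun a n => Hneg _ _ _ a n (H2 a n))).
      repeat split; lra.
    - right.
      pose proof (Ax_bnd _ 2 (Hb (j + Z.of_nat k)%Z) 1 2 H1).
      assert (forall x, -2 <= (fun x => - u (j + Z.of_nat k)%Z x) x <= -1) by (intro x; specialize (H1 x); unfold u in *; cbv beta in *; lra).
      pose proof (Ax_bnd _ 2 (Hbn (j + Z.of_nat k)%Z) (-2) (-1) H0).
      rewrite (Ax_transfer _ _ 2 2 (/3) 1 (Hb _) (Hb _) ltac:(lra) H2).
      rewrite (Ax_transfer _ _ 2 2 (/3) 1 (Hbn _) (Hbn _) ltac:(lra) (fun a n => Hneg _ _ _ a n (H2 a n))).
      repeat split; lra. }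
  pose proof (core_eq al be Hstep) as Heq. unfold al, be in Heq. simpl in Heq.
  rewrite Z.add_0_r in Heq.
  exists (Ax (u j)). apply (avg_from (u j) 2 (Hb j)). exact Heq.
Qed.
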